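(* There exist infinite diameter, infinite valence graphs $\mathcal G$ that are quasi-isometric to trees but whose Rips complex $R_d(\mathcal G)$ is not $CAT(0)$ for any $d$.
   Context: For a graph $\mathcal G$ and $d>0$, the Rips complex $R_d(\mathcal G)$ is the simplicial complex whose vertices are the vertices of $\mathcal G$ and whose simplices are the finite sets of vertices with pairwise distance $\le d$ in $\mathcal G$ (metrized as a piecewise Euclidean complex with regular simplices). *)

(* Defs.v *)
From Stdlib Require Import Reals List.
From Coquelicot Require Import Coquelicot.
Import ListNotations.
Open Scope R_scope.

Record graph := Graph {
  vert : Type;
  adj : vert -> vert -> Prop;
  adj_sym : forall u v, adj u v -> adj v u;
  adj_irrefl : forall v, ~ adj v v }.

Inductive walk (G : graph) : vert G -> vert G -> nat -> Prop :=
| walk_nil : forall v, walk G v v 0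
| walk_cons : forall u w v n, adj G u w -> walk G w v n -> walk G u v (S n).

Definition gdist (G : graph) (u v : vert G) (n : nat) : Prop :=
  walk G u v n /\ forall m, walk G u v m -> (n <= m)%nat.

Definition connected (G : graph) : Prop :=
  forall u v : vert G, exists n, walk G u v n.

Definition infinite_diameter (G : graph) : Prop :=
  forall n : nat, exists u v : vert G, forall m, walk G u v m -> (n <= m)%nat.

Definition infinite_valence (G : graph) : Prop :=
  exists v : vert G, ~ exists l : list (vert G), forall w, adj G v w -> In w l.

Fixpoint consec_adj (G : graph) (l : list (vert G)) : Prop :=
  match l with
  | x :: ((y :: _) as t) => adj G x y /\ consec_adj G t
  | _ => True
  end.

Definition is_cycle (G : graph) (l : list (vert G)) : Prop :=
  (3 <= length l)%nat /\ NoDup l /\ consec_adj G l /\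
  exists x y, head l = Some x /\ last l x = y /\ adj G y x.

Definition is_tree (T : graph) : Prop :=
  connected T /\ forall l, ~ is_cycle T l.

Definition quasi_isometric (G H : graph) : Prop :=
  exists (f : vert G -> vert H) (lam C : R), 1 <= lam /\ 0 <= C /\
    (forall x y n m, gdist G x y n -> gdist H (f x) (f y) m ->
        / lam * INR n - C <= INR m /\ INR m <= lam * INR n + C) /\
    (forall z : vert H, exists x n, gdist H (f x) z n /\ INR n <= C).

Definition qi_to_tree (G : graph) : Prop :=
  exists T : graph, is_tree T /\ quasi_isometric G T.

Definition within (G : graph) (d : R) (u v : vert G) : Prop :=
  exists n, walk G u v n /\ INR n <= d.

Definition rsimplex (G : graph) (d : R) (s : list (vert G)) : Prop :=
  forall u v, In u s -> In v s -> within G d u v.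

Definition lsum {A : Type} (F : A -> R) (s : list A) : R :=
  fold_right (fun a acc => F a + acc) 0 s.

(* points = barycentric coordinates, supported on a simplex *)
Definition rips_point_prop (G : graph) (d : R) (f : vert G -> R) : Prop :=
  (forall v, 0 <= f v) /\
  exists s, NoDup s /\ rsimplex G d s /\ (forall v, f v <> 0 -> In v s) /\
            lsum f s = 1.

Definition rips_point (G : graph) (d : R) : Type :=
  { f : vert G -> R | rips_point_prop G d f }.

Definition coord {G : graph} {d : R} (x : rips_point G d) : vert G -> R :=
  proj1_sig x.

(* x and y lie in a common simplex s, and r is their Euclidean distance there,
   each simplex being a regular Euclidean simplex with edge length 1
   (vertex v realized as e_v / sqrt 2) *)
Definition seg_len (G : graph) (d : R) (x y : rips_point G d) (r : R) : Prop :=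
  exists s, NoDup s /\ rsimplex G d s /\
    (forall v, coord x v <> 0 -> In v s) /\ (forall v, coord y v <> 0 -> In v s) /\
    r = sqrt (lsum (fun v => (coord x v - coord y v) ^ 2) s / 2).

Inductive chain (G : graph) (d : R) : rips_point G d -> rips_point G d -> R -> Prop :=
| chain_nil : forall x, chain G d x x 0
| chain_cons : forall x z y a b,
    seg_len G d x z a -> chain G d z y b -> chain G d x y (a + b).

Definition rips_dist (G : graph) (d : R) (x y : rips_point G d) : R :=
  real (Glb_Rbar (fun r => chain G d x y r)).

Definition geodesic {X : Type} (D : X -> X -> R) (x y : X) (g : R -> X) : Prop :=
  g 0 = x /\ g (D x y) = y /\
  forall s t, 0 <= s <= D x y -> 0 <= t <= D x y -> D (g s) (g t) = Rabs (s - t).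

Definition geodesic_space {X : Type} (D : X -> X -> R) : Prop :=
  forall x y, exists g, geodesic D x y g.

Definition euclid2 (p q : R * R) : R :=
  sqrt ((fst p - fst q) ^ 2 + (snd p - snd q) ^ 2).

Definition seg_pt (p q : R * R) (L t : R) : R * R :=
  (fst p + t / L * (fst q - fst p), snd p + t / L * (snd q - snd p)).

Definition cat0_ineq {X : Type} (D : X -> X -> R) : Prop :=
  forall (x y z : X) (g1 g2 g3 : R -> X) (a b c : R * R),
    geodesic D x y g1 -> geodesic D y z g2 -> geodesic D z x g3 ->
    euclid2 a b = D x y -> euclid2 b c = D y z -> euclid2 c a = D z x ->
    let sides := [(g1, D x y, a, b); (g2, D y z, b, c); (g3, D z x, c, a)] in
    forall gi Li Pi Qi gj Lj Pj Qj s t,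
      In (gi, Li, Pi, Qi) sides -> In (gj, Lj, Pj, Qj) sides ->
      0 <= s <= Li -> 0 <= t <= Lj ->
      D (gi s) (gj t) <= euclid2 (seg_pt Pi Qi Li s) (seg_pt Pj Qj Lj t).

Definition CAT0 {X : Type} (D : X -> X -> R) : Prop :=
  geodesic_space D /\ cat0_ineq D.

(* R_d(G) is CAT(0): it is connected (so its length metric is finite-valued)
   and, with that metric, it is a CAT(0) space *)
Definition rips_CAT0 (G : graph) (d : R) : Prop :=
  (forall x y : rips_point G d, exists r, chain G d x y r) /\
  CAT0 (rips_dist G d).

(* Main.v *)
Require Import Defs.
From Stdlib Require Import Reals List.
From Coquelicot Require Import Coquelicot.
From Stdlib Require Import ZArith Lia Lra ProofIrrelevance FunctionalExtensionality PropExtensionality.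
Import ListNotations.
Open Scope R_scope.

Local Open Scope nat_scope.
Definition tadj (a b : nat) : Prop := a = S b \/ b = S a.
Lemma tadj_sym a b : tadj a b -> tadj b a. Proof. unfold tadj; tauto. Qed.
Lemma tadj_irr a : ~ tadj a a. Proof. unfold tadj; lia. Qed.
Definition T : graph := Graph nat tadj tadj_sym tadj_irr.

Definition V := (nat * nat)%type.
Definition gadj (x y : V) : Prop := tadj (fst x) (fst y).
Lemma gadj_sym a b : gadj a b -> gadj b a. Proof. unfold gadj, tadj; tauto. Qed.
Lemma gadj_irr a : ~ gadj a a. Proof. unfold gadj, tadj; lia. Qed.
Definition G0 : graph := Graph V gadj gadj_sym gadj_irr.

Lemma walk_app (H : graph) u v w n m : walk H u v n -> walk H v w m -> walk H u w (n + m).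
Proof. induction 1; intros; simpl; [auto| econstructor; eauto]. Qed.
Lemma walk_snoc H u v w n : walk H u v n -> adj H v w -> walk H u w (S n).
Proof. intros. replace (S n) with (n+1)%nat by lia. eapply walk_app; eauto.
  econstructor; eauto. constructor. Qed.
Lemma walk_rev H u v n : walk H u v n -> walk H v u n.
Proof. induction 1. constructor. eapply walk_snoc; eauto. apply adj_sym; auto. Qed.

Lemma walkT_bound a b n : walk T a b n -> (a <= b + n /\ b <= a + n)%nat.
Proof. induction 1 as [|u w v n Ha Hw IH]; [lia|]. change (tadj u w) in Ha; unfold tadj in Ha; lia. Qed.

Lemma walkG_T x y n : walk G0 x y n -> walk T (fst x) (fst y) n.
Proof. induction 1. constructor. econstructor; [exact H | exact IHwalk]. Qed.

Lemma walkT_up a k : walk T a (a+k) k.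
Proof. induction k. rewrite Nat.add_0_r; constructor.
  apply walk_snoc with (a+k)%nat; auto. change (tadj (a+k) (a + S k)). unfold tadj; lia. Qed.

Lemma walkT_ex a b : walk T a b (Nat.max a b - Nat.min a b).
Proof. destruct (Nat.le_ge_cases a b).
  - replace (Nat.max a b - Nat.min a b)%nat with (b - a)%nat by lia.
    pose proof (walkT_up a (b-a)). replace (a + (b-a))%nat with b in H0 by lia. auto.
  - replace (Nat.max a b - Nat.min a b)%nat with (a - b)%nat by lia. apply walk_rev.
    pose proof (walkT_up b (a-b)). replace (b + (a-b))%nat with a in H0 by lia. auto.
Qed.

Lemma walkG_up a i k : forall j, walk G0 (a,i) (a + S k, j) (S k).
Proof. induction k; intros j.
  - econstructor; [|constructor]. change (tadj a (a+1)); unfold tadj; lia.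
  - apply walk_snoc with (a + S k, 0)%nat; auto. change (tadj (a + S k) (a + S (S k))); unfold tadj; lia.
Qed.

Lemma walkG_ex (x y : V) : exists n, walk G0 x y n /\ (n <= Nat.max (fst x) (fst y) - Nat.min (fst x) (fst y) + 2)%nat.
Proof. destruct x as [a i], y as [b j]; simpl.
  destruct (Nat.lt_total a b) as [H|[H|H]].
  - exists (S (b - a - 1)). split; [|lia]. pose proof (walkG_up a i (b-a-1) j).
    replace (a + S (b-a-1))%nat with b in H0 by lia. auto.
  - subst. exists 2%nat. split; [|lia]. apply walk_cons with (S b, 0).
    change (tadj b (S b)); unfold tadj; lia. apply walk_cons with (b, j). change (tadj (S b) b); unfold tadj; lia. constructor.
  - exists (S (a - b - 1)). split; [|lia]. apply walk_rev. pose proof (walkG_up b j (a-b-1) i).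
    replace (b + S (a-b-1))%nat with a in H0 by lia. auto.
Qed.

Lemma last_def {A} (z : A) t a b : last (z :: t) a = last (z :: t) b.
Proof. revert z; induction t; intros. reflexivity. change (last (a0 :: t) a = last (a0 :: t) b). apply IHt. Qed.

Lemma path_mono : forall (t : list nat) (x y : nat), NoDup (x :: y :: t) -> consec_adj T (x :: y :: t) ->
  (y = S x -> last (y :: t) x = (x + S (length t))%nat) /\
  (x = S y -> x = (last (y::t) x + S (length t))%nat).
Proof.
  induction t as [|z t IH]; intros x y Hnd Hc.
  - simpl. lia.
  - simpl in Hc. destruct Hc as [Hxy [Hyz Hc]].
    change (tadj y z) in Hyz. unfold tadj in Hyz.
    assert (Hxz : x <> z :> nat). { intro; subst. inversion Hnd. apply H1. simpl; auto. }
    inversion Hnd; subst.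
    destruct (IH y z H2) as [I1 I2]. { simpl. split; [change (tadj y z); unfold tadj; lia| exact Hc]. }
    change (last (y :: z :: t) x) with (last (z :: t) x).
    rewrite (last_def z t x y). simpl length.
    split; intro E.
    + assert (z = S y) by lia. rewrite I1; auto. lia.
    + assert (y = S z) by lia. specialize (I2 H). lia.
Qed.

Lemma T_acyclic l : ~ is_cycle T l.
Proof.
  intros [Hlen [Hnd [Hc [x0 [y0 [Hh [Hl Ha]]]]]]].
  destruct l as [|x [|y [|z t]]]; simpl in Hlen; try lia.
  simpl in Hh. injection Hh as <-.
  assert (Hxy : tadj x y) by (exact (proj1 Hc)).
  destruct (path_mono (z::t) x y Hnd Hc) as [P1 P2].
  change (last (x :: y :: z :: t) x) with (last (y :: z :: t) x) in Hl.
  change (tadj y0 x) in Ha. subst y0. unfold tadj in *. simpl length in *.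
  change (last (y :: z :: t) x) with (@last nat (y :: z :: t) x) in *.
  set (q := @last nat (y :: z :: t) x) in *.
  destruct Hxy as [E|E]; [specialize (P2 E)|specialize (P1 E)]; lia.
Qed.

Lemma T_conn : connected T.
Proof. intros a b. eexists. apply walkT_ex. Qed.

Lemma G0_conn : connected G0.
Proof. intros x y. destruct (walkG_ex x y) as [n [H _]]. eauto. Qed.

Lemma bound_list (l : list V) : exists j, forall x, In x l -> (snd x < j)%nat.
Proof. induction l as [|a l [j Hj]]. exists 0%nat; simpl; tauto.
  exists (S (Nat.max j (snd a))). intros x [<-|H]. lia. specialize (Hj x H). lia. Qed.

Lemma G0_qi : qi_to_tree G0.
Proof.
  exists T. split. split. apply T_conn. apply T_acyclic.
  exists fst, 1%R, 2%R. split; [lra|]. split; [lra|]. split.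
  - intros x y n m [Hn Hnm] [Hm Hmm].
    assert (m <= n)%nat by (apply Hmm; apply walkG_T; auto).
    destruct (walkG_ex x y) as [n' [Hw Hn']].
    specialize (Hnm n' Hw). pose proof (walkT_bound _ _ _ Hm).
    assert (n <= m + 2)%nat by lia.
    apply le_INR in H. apply le_INR in H1. rewrite plus_INR in H1. simpl in H1.
    split; lra.
  - intros z. exists (z,0%nat), 0%nat. split. split. constructor. intros; lia. simpl; lra.
Qed.

Local Open Scope R_scope.

Definition V_eq_dec : forall x y : V, {x = y} + {x <> y}.
Proof. decide equality; apply Nat.eq_dec. Defined.

Definition vcoord (a : V) : V -> R := fun v => if V_eq_dec v a then 1 else 0.

Lemma vpt_prop d (hd : 0 <= d) a : rips_point_prop G0 d (vcoord a).
Proof.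
  split. intro v; unfold vcoord; destruct V_eq_dec; lra.
  exists [a]. repeat split.
  - constructor; [simpl; tauto | constructor].
  - intros u v [<-|[]] [<-|[]]. exists 0%nat. split; [constructor| simpl; lra].
  - intros v Hv. unfold vcoord in Hv. destruct V_eq_dec; [left; auto | lra].
  - unfold lsum; simpl. unfold vcoord. destruct V_eq_dec; [lra| congruence].
Qed.
Definition vpt d hd a : rips_point G0 d := exist _ (vcoord a) (vpt_prop d hd a).

Lemma rp_eq d (x y : rips_point G0 d) : coord x = coord y -> x = y.
Proof. destruct x as [f hf], y as [g hg]; unfold coord; simpl. intros ->. f_equal. apply proof_irrelevance. Qed.

Lemma chain_nonneg d x y r : chain G0 d x y r -> 0 <= r.
Proof. induction 1. lra.
  assert (0 <= a) by (destruct H as [s [_ [_ [_ [_ Ha]]]]]; rewrite Ha; apply sqrt_pos). lra. Qed.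

Lemma rd_nonneg d x y : 0 <= rips_dist G0 d x y.
Proof.
  unfold rips_dist. destruct (Glb_Rbar_correct (fun r => chain G0 d x y r)) as [Hlb Hglb].
  assert (H0: Rbar_le (Finite 0) (Glb_Rbar (fun r => chain G0 d x y r))).
  { apply Hglb. intros r Hr. simpl. apply (chain_nonneg _ _ _ _ Hr). }
  destruct (Glb_Rbar (fun r => chain G0 d x y r)); simpl in *; try lra; contradiction.
Qed.

Lemma rd_refl d x : rips_dist G0 d x x = 0.
Proof.
  unfold rips_dist. destruct (Glb_Rbar_correct (fun r => chain G0 d x x r)) as [Hlb Hglb].
  assert (H0: Rbar_le (Finite 0) (Glb_Rbar (fun r => chain G0 d x x r))).
  { apply Hglb. intros r Hr. simpl. apply (chain_nonneg _ _ _ _ Hr). }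
  assert (H1 := Hlb 0 (chain_nil _ _ x)).
  destruct (Glb_Rbar (fun r => chain G0 d x x r)); simpl in *; try lra; contradiction.
Qed.

Section Pi.
End Pi.

Lemma walk_pi (pi : V -> V) (Hf : forall v, fst (pi v) = fst v) u v n :
  walk G0 u v n -> walk G0 (pi u) (pi v) n.
Proof. induction 1. constructor. econstructor; [|eassumption].
  change (gadj (pi u) (pi w)). unfold gadj. rewrite !Hf. exact H. Qed.

Lemma lsum_map_pi (pi : V -> V) (Hinv : forall v, pi (pi v) = v) (f : V -> R) s :
  lsum (fun v => f (pi v)) (map pi s) = lsum f s.
Proof. unfold lsum. induction s; simpl; [reflexivity | rewrite Hinv, IHs; reflexivity]. Qed.

Lemma nodup_pi (pi : V -> V) (Hinv : forall v, pi (pi v) = v) s : NoDup s -> NoDup (map pi s).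
Proof. intros H. apply NoDup_map_NoDup_ForallPairs; auto.
  intros a b _ _ E. rewrite <- (Hinv a), <- (Hinv b), E; reflexivity. Qed.

Lemma simp_pi d (pi : V -> V) (Hf : forall v, fst (pi v) = fst v) s :
  rsimplex G0 d s -> rsimplex G0 d (map pi s).
Proof. intros Hs u v Hu Hv. apply in_map_iff in Hu as [u' [<- Hu']]. apply in_map_iff in Hv as [v' [<- Hv']].
  destruct (Hs u' v' Hu' Hv') as [n [Hw Hn]]. exists n; split; [apply walk_pi; auto | exact Hn]. Qed.

Lemma supp_pi (pi : V -> V) (Hinv : forall v, pi (pi v) = v) (f : V -> R) s :
  (forall v, f v <> 0 -> In v s) -> forall v, f (pi v) <> 0 -> In v (map pi s).
Proof. intros Hs v Hv. apply Hs in Hv. apply in_map_iff. exists (pi v); split; auto. Qed.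

Lemma rpp_pi d pi (Hf : forall v, fst (pi v) = fst v) (Hinv : forall v, pi (pi v) = v) f :
  rips_point_prop G0 d f -> rips_point_prop G0 d (fun v => f (pi v)).
Proof.
  intros [Hnn [s [Hnd [Hs [Hsup Hsum]]]]]. split; [intro; apply Hnn|].
  exists (map pi s). repeat split.
  - apply nodup_pi; auto.
  - apply simp_pi; auto.
  - apply supp_pi; auto.
  - rewrite lsum_map_pi; auto.
Qed.

Definition rho d pi Hf Hinv (x : rips_point G0 d) : rips_point G0 d :=
  exist _ (fun v => coord x (pi v)) (rpp_pi d pi Hf Hinv (coord x) (proj2_sig x)).

Lemma seg_pi d pi Hf Hinv x z r : seg_len G0 d x z r ->
  seg_len G0 d (rho d pi Hf Hinv x) (rho d pi Hf Hinv z) r.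
Proof.
  intros [s [Hnd [Hs [Hx [Hz Hr]]]]]. exists (map pi s). repeat split.
  - apply nodup_pi; auto.
  - apply simp_pi; auto.
  - apply (supp_pi pi Hinv (coord x)); auto.
  - apply (supp_pi pi Hinv (coord z)); auto.
  - rewrite Hr. f_equal. f_equal. symmetry.
    exact (lsum_map_pi pi Hinv (fun v => (coord x v - coord z v)^2) s).
Qed.

Lemma chain_pi d pi Hf Hinv x y r : chain G0 d x y r ->
  chain G0 d (rho d pi Hf Hinv x) (rho d pi Hf Hinv y) r.
Proof. induction 1. constructor. econstructor; [apply seg_pi; eauto | eauto]. Qed.

Lemma rho_inv d pi Hf Hinv x : rho d pi Hf Hinv (rho d pi Hf Hinv x) = x.
Proof. apply rp_eq. unfold coord; simpl. apply functional_extensionality; intro v.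
  rewrite Hinv; reflexivity. Qed.

Lemma rd_pi d pi Hf Hinv x y :
  rips_dist G0 d (rho d pi Hf Hinv x) (rho d pi Hf Hinv y) = rips_dist G0 d x y.
Proof.
  unfold rips_dist. f_equal. f_equal. apply functional_extensionality; intro r.
  apply propositional_extensionality. split; intro H.
  - apply (chain_pi d pi Hf Hinv) in H. rewrite !rho_inv in H. exact H.
  - apply chain_pi; auto.
Qed.

Lemma rho_vpt d hd pi Hf Hinv a : pi a = a -> rho d pi Hf Hinv (vpt d hd a) = vpt d hd a.
Proof. intros Ha. apply rp_eq. unfold coord; simpl. apply functional_extensionality; intro v.
  unfold vcoord. destruct (V_eq_dec (pi v) a), (V_eq_dec v a); auto.
  - exfalso. apply n. rewrite <- (Hinv v), e. auto.
  - exfalso. apply n. subst; auto.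
Qed.

Lemma lsum_zero (f : V -> R) s : (forall v, In v s -> f v = 0) -> lsum f s = 0.
Proof. unfold lsum. induction s; simpl; intros H; auto. rewrite H, IHs; auto. ring. Qed.

Lemma lsum_single (f : V -> R) a s : NoDup s -> (forall v, v <> a -> f v = 0) ->
  lsum f s = f a \/ lsum f s = 0.
Proof. induction s as [|b t IH]; intros Hnd Hz. right; reflexivity.
  change (lsum f (b :: t)) with (f b + lsum f t). inversion Hnd; subst.
  destruct (V_eq_dec b a).
  - subst. left. rewrite lsum_zero. ring. intros v Hv; apply Hz; intro; subst; contradiction.
  - rewrite (Hz b n). destruct (IH H2 Hz) as [-> | ->]; [left|right]; ring.
Qed.

Lemma pt_is_vpt d hd (x : rips_point G0 d) a : (forall v, v <> a -> coord x v = 0) -> x = vpt d hd a.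
Proof.
  intros Hz. destruct (proj2_sig x) as [Hnn [s [Hnd [_ [_ Hsum]]]]].
  destruct (lsum_single (coord x) a s Hnd Hz) as [E|E]; [|exfalso; change (@lsum V (coord x) s = 1) in Hsum; rewrite E in Hsum; lra].
  change (@lsum V (coord x) s = 1) in Hsum. rewrite E in Hsum.
  apply rp_eq. apply functional_extensionality; intro v. unfold coord at 2; simpl. unfold vcoord.
  destruct V_eq_dec. subst; lra. auto.
Qed.

Definition swp (i j b : nat) : nat := if Nat.eqb b i then j else if Nat.eqb b j then i else b.
Definition pisw (n i j : nat) (v : V) : V := if Nat.eqb (fst v) n then (fst v, swp i j (snd v)) else v.
Lemma pisw_fst n i j v : fst (pisw n i j v) = fst v.
Proof. unfold pisw. destruct Nat.eqb; auto. Qed.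
Lemma swp_inv i j b : swp i j (swp i j b) = b.
Proof. unfold swp.
  destruct (Nat.eqb_spec b i) as [->|Hbi].
  - destruct (Nat.eqb_spec j i) as [->|Hji]; [reflexivity|]. rewrite Nat.eqb_refl. reflexivity.
  - destruct (Nat.eqb_spec b j) as [->|Hbj].
    + rewrite Nat.eqb_refl. reflexivity.
    + destruct (Nat.eqb_spec b i); [lia|]. destruct (Nat.eqb_spec b j); [lia|]. reflexivity.
Qed.
Lemma pisw_inv n i j v : pisw n i j (pisw n i j v) = v.
Proof. destruct v as [a b]. unfold pisw; simpl.
  destruct (Nat.eqb_spec a n); simpl.
  - rewrite (proj2 (Nat.eqb_eq a n) e). rewrite swp_inv. reflexivity.
  - destruct (Nat.eqb_spec a n); congruence.
Qed.

Lemma pisw_fix n i j a : (n <> a \/ (i <> 0 /\ j <> 0))%nat -> pisw n i j (a,0%nat) = (a,0%nat).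
Proof. intros H. unfold pisw; simpl. destruct (Nat.eqb_spec a n); auto.
  f_equal. unfold swp. destruct (Nat.eqb_spec 0 i); [lia|]. destruct (Nat.eqb_spec 0 j); [lia|]. auto.
Qed.

Lemma geo_eq d (Hgeo : geodesic_space (rips_dist G0 d)) p q : rips_dist G0 d p q = 0 -> p = q.
Proof. intros H. destruct (Hgeo p q) as [k [Hk0 [HkL _]]]. rewrite H in HkL. congruence. Qed.

Lemma exists_big d : exists k : nat, d < INR k.
Proof. destruct (archimed d) as [H _]. destruct (Z_le_gt_dec 0 (up d)).
  - exists (Z.to_nat (up d)). rewrite INR_IZR_INZ, Z2Nat.id; auto.
  - exists 0%nat. apply Z.gt_lt in g. apply IZR_lt in g. simpl. lra.
Qed.

Lemma rips_not_cat0 d : 0 < d -> ~ rips_CAT0 G0 d.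
Proof.
  intros hd [_ [Hgeo Hcat]].
  assert (hd' : 0 <= d) by lra.
  destruct (exists_big d) as [k Hk].
  assert (Hk1 : (k <> 0)%nat). { intro; subst; simpl in Hk; lra. }
  set (u := vpt d hd' (0,0)%nat). set (w := vpt d hd' (k,0)%nat).
  assert (Huw : u <> w).
  { intro E. apply (f_equal (fun p : rips_point G0 d => coord p ((0,0)%nat : vert G0))) in E. unfold u, w, coord in E; simpl in E.
    unfold vcoord in E. destruct V_eq_dec; [|congruence]. destruct V_eq_dec. injection e0; lia. lra. }
  destruct (Hgeo u w) as [g [Hg0 [HgL Hgd]]].
  set (L := rips_dist G0 d u w) in *.
  assert (HL0 : 0 <= L) by apply rd_nonneg.
  assert (HL : 0 < L).
  { destruct HL0 as [|E]; auto. exfalso. apply Huw. rewrite <- Hg0, <- HgL, <- E. reflexivity. }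
  assert (Hwu : rips_dist G0 d w u = L).
  { specialize (Hgd L 0). rewrite HgL, Hg0 in Hgd. rewrite Hgd by lra.
    rewrite Rminus_0_r, Rabs_right; lra. }
  destruct (Hgeo w u) as [h Hh].
  assert (Hconst : geodesic (rips_dist G0 d) w w (fun _ => w)).
  { split; auto. split; auto. intros s t Hs Ht. rewrite rd_refl in *.
    replace s with 0 by lra. replace t with 0 by lra. rewrite Rminus_0_r, Rabs_R0. reflexivity. }
  assert (Key : forall g', geodesic (rips_dist G0 d) u w g' -> forall s, 0 <= s <= L -> g' s = h (L - s)).
  { intros g' Hg' s Hs.
    assert (E1 : euclid2 (0,L*0) (L,0) = rips_dist G0 d u w).
    { unfold euclid2; cbn [fst snd]. fold L. replace ((0 - L) ^ 2 + (L*0 - 0) ^ 2) with (L*L) by ring.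
      apply sqrt_square; lra. }
    assert (E2 : euclid2 (L,0) (L,0) = rips_dist G0 d w w).
    { unfold euclid2; cbn [fst snd]. rewrite rd_refl. replace ((L - L) ^ 2 + (0 - 0) ^ 2) with 0 by ring.
      apply sqrt_0. }
    assert (E3 : euclid2 (L,0) (0,L*0) = rips_dist G0 d w u).
    { unfold euclid2; cbn [fst snd]. rewrite Hwu. replace ((L - 0) ^ 2 + (0 - L*0) ^ 2) with (L*L) by ring.
      apply sqrt_square; lra. }
    specialize (Hcat u w w g' (fun _ => w) h (0,L*0) (L,0) (L,0) Hg' Hconst Hh E1 E2 E3).
    cbv zeta in Hcat.
    specialize (Hcat g' (rips_dist G0 d u w) (0,L*0) (L,0) h (rips_dist G0 d w u) (L,0) (0,L*0) s (L - s)
      (or_introl eq_refl) (or_intror (or_intror (or_introl eq_refl)))).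
    fold L in Hcat. rewrite Hwu in Hcat. specialize (Hcat Hs ltac:(lra)).
    replace (euclid2 _ _) with 0 in Hcat.
    2:{ unfold euclid2, seg_pt; simpl. rewrite <- sqrt_0. f_equal. field. lra. }
    apply (geo_eq d Hgeo). pose proof (rd_nonneg d (g' s) (h (L - s))). lra. }
  set (x := g (L/2)).
  assert (Hx : x = h (L - L/2)) by (apply Key; [split; auto| lra]).
  assert (Hfix : forall pi Hf Hinv, pi (0,0)%nat = (0,0)%nat -> pi (k,0)%nat = (k,0)%nat ->
            x = rho d pi Hf Hinv x).
  { intros pi Hf Hinv P0 Pk.
    assert (Hg'' : geodesic (rips_dist G0 d) u w (fun t => rho d pi Hf Hinv (g t))).
    { split; [|split].
      - rewrite Hg0. apply rho_vpt; auto.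
      - fold L. rewrite HgL. apply rho_vpt; auto.
      - intros s t Hs Ht. rewrite rd_pi. apply Hgd; auto. }
    assert (E := Key _ Hg'' (L/2) ltac:(lra)). cbv beta in E. rewrite <- Hx in E. symmetry; exact E. }
  assert (Hzero : forall v, v <> (0,0)%nat -> v <> (k,0)%nat -> coord x v = 0).
  { intros [n i] Hv0 Hvk.
    destruct (proj2_sig x) as [Hnn [s [Hnd [Hs [Hsup Hsum]]]]].
    destruct (bound_list s) as [j0 Hj0]. set (j := S j0).
    assert (Hp0 : pisw n i j (0,0)%nat = (0,0)%nat).
    { apply pisw_fix. destruct (Nat.eq_dec n 0); [right|left; auto]. subst.
      split; [intro; subst; congruence | unfold j; lia]. }
    assert (Hpk : pisw n i j (k,0)%nat = (k,0)%nat).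
    { apply pisw_fix. destruct (Nat.eq_dec n k); [right|left; auto]. subst.
      split; [intro; subst; congruence | unfold j; lia]. }
    pose proof (Hfix (pisw n i j) (pisw_fst n i j) (pisw_inv n i j) Hp0 Hpk) as E.
    apply (f_equal (fun p : rips_point G0 d => coord p ((n,i) : vert G0))) in E. unfold coord at 2 in E. simpl in E.
    assert (Hni : pisw n i j (n,i) = (n,j)).
    { unfold pisw, swp; simpl. rewrite !Nat.eqb_refl. auto. }
    rewrite Hni in E. rewrite E.
    destruct (Req_dec (coord x (n,j)) 0) as [Z|NZ]; auto. exfalso.
    apply Hsup in NZ. apply Hj0 in NZ. simpl in NZ. unfold j in NZ; lia. }
  destruct (Req_dec (coord x (k,0)%nat) 0) as [Zk|NZk].
  - assert (Ex : x = u).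
    { apply pt_is_vpt. intros v Hv. destruct (V_eq_dec v (k,0)%nat). subst; auto. apply Hzero; auto. }
    specialize (Hgd 0 (L/2) ltac:(lra) ltac:(lra)). rewrite Hg0 in Hgd. fold x in Hgd.
    rewrite Ex, rd_refl in Hgd. rewrite Rabs_left in Hgd; lra.
  - destruct (Req_dec (coord x (0,0)%nat) 0) as [Z0|NZ0].
    + assert (Ex : x = w).
      { apply pt_is_vpt. intros v Hv. destruct (V_eq_dec v (0,0)%nat). subst; auto. apply Hzero; auto. }
      specialize (Hgd (L/2) L ltac:(lra) ltac:(lra)). rewrite HgL in Hgd. fold x in Hgd.
      rewrite Ex, rd_refl in Hgd. rewrite Rabs_left in Hgd; lra.
    + exfalso. destruct (proj2_sig x) as [Hnn [s [Hnd [Hs [Hsup Hsum]]]]].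
      destruct (Hs (0,0)%nat (k,0)%nat (Hsup _ NZ0) (Hsup _ NZk)) as [m [Hw Hm]].
      apply walkG_T in Hw. apply walkT_bound in Hw. simpl in Hw.
      assert (k <= m)%nat by lia. apply le_INR in H. lra.
Qed.

Theorem corollary4p10 :
  exists G : graph,
    connected G /\ infinite_diameter G /\ infinite_valence G /\ qi_to_tree G /\
    forall d : R, 0 < d -> ~ rips_CAT0 G d.
Proof.
  exists G0. split; [apply G0_conn|]. split.
  - intros n. exists (0,0)%nat, (n,0)%nat. intros m Hw. apply walkG_T, walkT_bound in Hw. simpl in Hw. lia.
  - split.
    + exists (0,0)%nat. intros [l Hl]. destruct (bound_list l) as [j Hj].
      assert (H : In (1%nat, j) l). { apply Hl. change (tadj 0 1). unfold tadj; lia. }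
      apply Hj in H. simpl in H. lia.
    + split; [apply G0_qi | apply rips_not_cat0].
Qed.
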